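(* Let $H=(H,\Delta,\epsilon,\phi,S,\alpha,\beta)$ be a quasi-Hopf algebra over a field $k$ (not necessarily finite-dimensional), and let $\nu\colon H\to Q$ be a surjective morphism of quasibialgebras onto a finite-dimensional quasibialgebra $Q$. Then $S(\ker\nu)\subseteq\ker\nu$. Consequently $S$ induces an anti-algebra endomorphism $\overline S$ of $Q$ with $\overline S\circ\nu=\nu\circ S$, the triple $(\overline S,\nu(\alpha),\nu(\beta))$ is a quasi-antipode for $Q$, and $\nu$ is a morphism of quasi-Hopf algebras; i.e. $Q$ is a quotient quasi-Hopf algebra of $H$.
   Context: A quasibialgebra $(H,\Delta,\epsilon,\phi)$ over a field $k$ consists of an algebra $H$, algebra maps $\Delta\colon H\to H\otimes H$, $h\mapsto h_{(1)}\otimes h_{(2)}$, and $\epsilon\colon H\to k$, and an invertible $\phi=\phi^{(1)}\otimes\phi^{(2)}\otimes\phi^{(3)}\in H^{\otimes 3}$ (with $\phi^{-1}=\phi^{(-1)}\otimes\phi^{(-2)}\otimes\phi^{(-3)}$) such that $(\epsilon\otimes H)\Delta(h)=h=(H\otimes\epsilon)\Delta(h)$; $(H\otimes\Delta)\Delta(h)\,\phi=\phi\,(\Delta\otimes H)\Delta(h)$; $(H\otimes H\otimes\Delta)(\phi)(\Delta\otimes H\otimes H)(\phi)=(1\otimes\phi)(H\otimes\Delta\otimes H)(\phi)(\phi\otimes 1)$; and $(H\otimes\epsilon\otimes H)(\phi)=1$. A morphism of quasibialgebras $f\colon(H,\phi)\to(L,\psi)$ is an algebra map with $\Delta f=(f\otimes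 f)\Delta$, $\epsilon f=\epsilon$, $(f\otimes f\otimes f)(\phi)=\psi$. A quasi-antipode is a triple $(S,\alpha,\beta)$ with $\alpha,\beta\in H$ and $S$ an anti-algebra endomorphism of $H$ (not required to be bijective) such that for all $h\in H$: $S(h_{(1)})\alpha h_{(2)}=\epsilon(h)\alpha$, $h_{(1)}\beta S(h_{(2)})=\epsilon(h)\beta$, $\phi^{(1)}\beta S(\phi^{(2)})\alpha\phi^{(3)}=1$, $S(\phi^{(-1)})\alpha\phi^{(-2)}\beta S(\phi^{(-3)})=1$. A quasi-Hopf algebra is a quasibialgebra with a quasi-antipode; a morphism of quasi-Hopf algebras is a quasibialgebra morphism $f$ with $S'f=fS$, $f(\alpha)=\alpha'$, $f(\beta)=\beta'$. *)

(* Defs.v *)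
From HB Require Import structures.
From mathcomp Require Import all_boot all_algebra.
From mathcomp Require Import falgebra.
Set Implicit Arguments.
Unset Strict Implicit.
Unset Printing Implicit Defensive.
Import GRing.Theory.
Local Open Scope ring_scope.

(* Algebras over a field k are [algType k] (possibly
   infinite-dimensional); a finite-dimensional algebra is an [falgType k]. *)

Section Tensors.
Variable k : fieldType.

Definition klinear (U W : lmodType k) (f : U -> W) : Prop :=
  forall (a : k) (x y : U), f (a *: x + y) = a *: f x + f y.

Variable A : algType k.

Definition multilin2 (W : lmodType k) (m : A -> A -> W) : Prop :=
  (forall y, klinear (fun x => m x y)) /\ (forall x, klinear (fun y => m x y)).
Definition multilin3 (W : lmodType k) (m : A -> A -> A -> W) : Prop :=
  [/\ forall y z, klinear (fun x => m x y z),
      forall x z, klinear (fun y => m x y z) &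
      forall x y, klinear (fun z => m x y z)].
Definition multilin4 (W : lmodType k) (m : A -> A -> A -> A -> W) : Prop :=
  [/\ forall y z w, klinear (fun x => m x y z w),
      forall x z w, klinear (fun y => m x y z w),
      forall x y w, klinear (fun z => m x y z w) &
      forall x y z, klinear (fun w => m x y z w)].

(* Elements of A^{(x)n} are represented by finite sums of elementary tensors
   (lists of n-tuples); [teqn t u] is equality in the algebraic tensor product
   A (x)_k ... (x)_k A, expressed via its universal property: t and u agree
   under every k-multilinear map to every k-vector space. *)
Definition tensor2 := seq (A * A).
Definition tensor3 := seq (A * A * A).
Definition tensor4 := seq (A * A * A * A).

Definition teq2 (t u : tensor2) : Prop :=
  forall (W : lmodType k) (m : A -> A -> W), multilin2 m ->
    \sum_(x <- t) m x.1 x.2 = \sum_(x <- u) m x.1 x.2.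
Definition teq3 (t u : tensor3) : Prop :=
  forall (W : lmodType k) (m : A -> A -> A -> W), multilin3 m ->
    \sum_(x <- t) m x.1.1 x.1.2 x.2 = \sum_(x <- u) m x.1.1 x.1.2 x.2.
Definition teq4 (t u : tensor4) : Prop :=
  forall (W : lmodType k) (m : A -> A -> A -> A -> W), multilin4 m ->
    \sum_(x <- t) m x.1.1.1 x.1.1.2 x.1.2 x.2
    = \sum_(x <- u) m x.1.1.1 x.1.1.2 x.1.2 x.2.

Definition tmul2 (t u : tensor2) : tensor2 :=
  [seq (x.1 * y.1, x.2 * y.2) | x <- t, y <- u].
Definition tmul3 (t u : tensor3) : tensor3 :=
  [seq (x.1.1 * y.1.1, x.1.2 * y.1.2, x.2 * y.2) | x <- t, y <- u].
Definition tmul4 (t u : tensor4) : tensor4 :=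
  [seq (x.1.1.1 * y.1.1.1, x.1.1.2 * y.1.1.2, x.1.2 * y.1.2, x.2 * y.2)
  | x <- t, y <- u].

Definition tone2 : tensor2 := [:: (1, 1)].
Definition tone3 : tensor3 := [:: (1, 1, 1)].

Definition tscale2 (a : k) (t : tensor2) : tensor2 :=
  [seq (a *: x.1, x.2) | x <- t].
Definition tadd2 (t u : tensor2) : tensor2 := t ++ u.

Variable Delta : A -> tensor2.

Definition id_Delta (t : tensor2) : tensor3 :=
  flatten [seq [seq (x.1, y.1, y.2) | y <- Delta x.2] | x <- t].
Definition Delta_id (t : tensor2) : tensor3 :=
  flatten [seq [seq (y.1, y.2, x.2) | y <- Delta x.1] | x <- t].

Definition idid_Delta (t : tensor3) : tensor4 :=
  flatten [seq [seq (x.1.1, x.1.2, y.1, y.2) | y <- Delta x.2] | x <- t].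
Definition Delta_idid (t : tensor3) : tensor4 :=
  flatten [seq [seq (y.1, y.2, x.1.2, x.2) | y <- Delta x.1.1] | x <- t].
Definition id_Delta_id (t : tensor3) : tensor4 :=
  flatten [seq [seq (x.1.1, y.1, y.2, x.2) | y <- Delta x.1.2] | x <- t].

Definition one_tensor3 (t : tensor3) : tensor4 :=
  [seq (1, x.1.1, x.1.2, x.2) | x <- t].
Definition tensor3_one (t : tensor3) : tensor4 :=
  [seq (x.1.1, x.1.2, x.2, 1) | x <- t].

End Tensors.

Section QuasiHopf.
Variable k : fieldType.

Definition is_alg_map (A B : algType k) (f : A -> B) : Prop :=
  [/\ klinear f, forall x y, f (x * y) = f x * f y & f 1 = 1].

Definition is_anti_alg_endo (A : algType k) (S : A -> A) : Prop :=
  [/\ klinear S, forall x y, S (x * y) = S y * S x & S 1 = 1].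

Definition is_alg_char (A : algType k) (eps : A -> k) : Prop :=
  [/\ forall (a : k) (x y : A), eps (a *: x + y) = a * eps x + eps y,
      forall x y, eps (x * y) = eps x * eps y & eps 1 = 1].

(* (A, Delta, eps, phi) is a quasibialgebra; phiinv is the inverse of phi
   in A^{(x)3} (so phi is invertible, and phiinv is phi^{-1}). *)
Definition is_quasibialgebra (A : algType k) (Delta : A -> tensor2 A)
    (eps : A -> k) (phi phiinv : tensor3 A) : Prop :=
  (
      (forall (a : k) (x y : A),
          teq2 (Delta (a *: x + y)) (tadd2 (tscale2 a (Delta x)) (Delta y))) /\
      (forall x y, teq2 (Delta (x * y)) (tmul2 (Delta x) (Delta y))) /\
      teq2 (Delta 1) (tone2 A)) /\
  is_alg_char eps /\
  (forall h, \sum_(x <- Delta h) eps x.1 *: x.2 = h /\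
             \sum_(x <- Delta h) eps x.2 *: x.1 = h) /\
  (forall h, teq3 (tmul3 (id_Delta Delta (Delta h)) phi)
                  (tmul3 phi (Delta_id Delta (Delta h)))) /\
  teq4 (tmul4 (idid_Delta Delta phi) (Delta_idid Delta phi))
       (tmul4 (tmul4 (one_tensor3 phi) (id_Delta_id Delta phi))
              (tensor3_one phi)) /\
  teq2 [seq (eps x.1.2 *: x.1.1, x.2) | x <- phi] (tone2 A) /\
  (teq3 (tmul3 phi phiinv) (tone3 A) /\ teq3 (tmul3 phiinv phi) (tone3 A)).

Definition is_quasibialg_morphism (A B : algType k)
    (DeltaA : A -> tensor2 A) (epsA : A -> k) (phiA : tensor3 A)
    (DeltaB : B -> tensor2 B) (epsB : B -> k) (phiB : tensor3 B)
    (f : A -> B) : Prop :=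
  [/\ is_alg_map f,
      (forall h, teq2 (DeltaB (f h)) [seq (f x.1, f x.2) | x <- DeltaA h]),
      (forall h, epsB (f h) = epsA h) &
      teq3 [seq (f x.1.1, f x.1.2, f x.2) | x <- phiA] phiB].

Definition is_quasi_antipode (A : algType k) (Delta : A -> tensor2 A)
    (eps : A -> k) (phi phiinv : tensor3 A) (S : A -> A) (alpha beta : A)
    : Prop :=
  [/\ is_anti_alg_endo S,
      (forall h, \sum_(x <- Delta h) S x.1 * alpha * x.2 = eps h *: alpha),
      (forall h, \sum_(x <- Delta h) x.1 * beta * S x.2 = eps h *: beta),
      \sum_(x <- phi) x.1.1 * beta * S x.1.2 * alpha * x.2 = 1 &
      \sum_(x <- phiinv) S x.1.1 * alpha * x.1.2 * beta * S x.2 = 1].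

Definition is_quasiHopf_morphism (A B : algType k)
    (DeltaA : A -> tensor2 A) (epsA : A -> k) (phiA : tensor3 A)
    (SA : A -> A) (alphaA betaA : A)
    (DeltaB : B -> tensor2 B) (epsB : B -> k) (phiB : tensor3 B)
    (SB : B -> B) (alphaB betaB : B) (f : A -> B) : Prop :=
  [/\ is_quasibialg_morphism DeltaA epsA phiA DeltaB epsB phiB f,
      (forall h, SB (f h) = f (SA h)),
      f alphaA = alphaB & f betaA = betaB].

End QuasiHopf.

(* Main.v *)
Require Import Defs.
From HB Require Import structures.
From mathcomp Require Import all_boot all_algebra.
From mathcomp Require Import falgebra.
From mathcomp Require Import ring.
From Stdlib Require Import ClassicalEpsilon.
Set Implicit Arguments.
Unset Strict Implicit.
Unset Printing Implicit Defensive.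
Import GRing.Theory.
Local Open Scope ring_scope.

Section Lin.
Variable k : fieldType.
Implicit Types U W : lmodType k.

Lemma kl0 U W (f : U -> W) : klinear f -> f 0 = 0.
Proof. move=> hf; have := hf 1 0 0; rewrite !scale1r addr0 => h.
exact: esym (addrI _ (etrans (addr0 _) h)). Qed.
Lemma klD U W (f : U -> W) : klinear f -> forall x y, f (x + y) = f x + f y.
Proof. by move=> hf x y; have := hf 1 x y; rewrite !scale1r. Qed.
Lemma klZ U W (f : U -> W) : klinear f -> forall a x, f (a *: x) = a *: f x.
Proof. by move=> hf a x; rewrite -[a *: x]addr0 hf (kl0 hf) addr0. Qed.
Lemma klN U W (f : U -> W) : klinear f -> forall x, f (- x) = - f x.
Proof. by move=> hf x; rewrite -scaleN1r klZ // scaleN1r. Qed.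
Lemma klB U W (f : U -> W) : klinear f -> forall x y, f (x - y) = f x - f y.
Proof. by move=> hf x y; rewrite klD // klN. Qed.
Lemma klS U W (f : U -> W) : klinear f -> forall (I : Type) (r : seq I) (F : I -> U),
  f (\sum_(i <- r) F i) = \sum_(i <- r) f (F i).
Proof.
move=> hf I r F; elim: r => [|x r IH]; first by rewrite !big_nil kl0.
by rewrite !big_cons klD // IH.
Qed.

Lemma kl_sum U W (I : Type) (r : seq I) (F : I -> U -> W) :
  (forall i, klinear (F i)) -> klinear (fun x => \sum_(i <- r) F i x).
Proof.
move=> hF a x y; rewrite scaler_sumr -big_split /=; apply: eq_bigr => i _; exact: hF.
Qed.
Lemma kl_comp U (V : lmodType k) W (f : U -> V) (g : V -> W) : klinear f -> klinear g -> klinear (fun x => g (f x)).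
Proof. by move=> hf hg a x y; rewrite hf hg. Qed.
Lemma kl_id U : klinear (fun x : U => x). Proof. by []. Qed.
Lemma kl_scale U W (g : U -> k) (w : W) :
  (forall (a : k) x y, g (a *: x + y) = a * g x + g y) -> klinear (fun x => g x *: w).
Proof. by move=> hg a x y; rewrite hg scalerDl scalerA. Qed.
Lemma kl_scalev U W (c : k) (f : U -> W) : klinear f -> klinear (fun x => c *: f x).
Proof. by move=> hf a x y; rewrite hf scalerDr !scalerA mulrC. Qed.

Variable A : algType k.
Lemma kl_mull (a : A) : klinear (fun x : A => a * x).
Proof. by move=> c x y; rewrite mulrDr scalerAr. Qed.
Lemma kl_mulr (a : A) : klinear (fun x : A => x * a).
Proof. by move=> c x y; rewrite mulrDl scalerAl. Qed.
Lemma kl_mulrl (a b : A) : klinear (fun x : A => a * x * b).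
Proof. by move=> c x y; rewrite mulrDr mulrDl scalerAl scalerAr. Qed.
End Lin.
Lemma kl_sc (k : fieldType) (U : lmodType k) (c : k) : klinear (fun x : U => c *: x).
Proof. by move=> a x y; rewrite scalerDr !scalerA mulrC. Qed.


Section Tens.
Variable k : fieldType.
Variable A : algType k.
Implicit Types (W : lmodType k) (t u v : tensor2 A).

Lemma sum_tmul2 W (F : A * A -> W) (t u : tensor2 A) :
  \sum_(x <- tmul2 t u) F x = \sum_(x <- t) \sum_(y <- u) F (x.1 * y.1, x.2 * y.2).
Proof. by rewrite /tmul2 big_allpairs_dep. Qed.
Lemma sum_tmul3 W (F : A * A * A -> W) (t u : tensor3 A) :
  \sum_(x <- tmul3 t u) F x =
  \sum_(x <- t) \sum_(y <- u) F (x.1.1 * y.1.1, x.1.2 * y.1.2, x.2 * y.2).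
Proof. by rewrite /tmul3 big_allpairs_dep. Qed.
Lemma sum_tmul4 W (F : A * A * A * A -> W) (t u : tensor4 A) :
  \sum_(x <- tmul4 t u) F x =
  \sum_(x <- t) \sum_(y <- u) F (x.1.1.1 * y.1.1.1, x.1.1.2 * y.1.1.2, x.1.2 * y.1.2, x.2 * y.2).
Proof. by rewrite /tmul4 big_allpairs_dep. Qed.
Lemma sum_tadd2 W (F : A * A -> W) t u :
  \sum_(x <- tadd2 t u) F x = \sum_(x <- t) F x + \sum_(x <- u) F x.
Proof. by rewrite /tadd2 big_cat. Qed.
Lemma sum_tscale2 W (m : A -> A -> W) a t : (forall y, klinear (fun x => m x y)) ->
  \sum_(x <- tscale2 a t) m x.1 x.2 = a *: \sum_(x <- t) m x.1 x.2.
Proof.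
move=> hm; rewrite /tscale2 big_map scaler_sumr; apply: eq_bigr => x _ /=.
by rewrite (klZ (hm _)).
Qed.

Variable Delta : A -> tensor2 A.
Lemma sum_id_Delta W (F : A * A * A -> W) t :
  \sum_(x <- id_Delta Delta t) F x = \sum_(x <- t) \sum_(y <- Delta x.2) F (x.1, y.1, y.2).
Proof. by rewrite /id_Delta big_flatten big_map; apply: eq_bigr => x _; rewrite big_map. Qed.
Lemma sum_Delta_id W (F : A * A * A -> W) t :
  \sum_(x <- Delta_id Delta t) F x = \sum_(x <- t) \sum_(y <- Delta x.1) F (y.1, y.2, x.2).
Proof. by rewrite /Delta_id big_flatten big_map; apply: eq_bigr => x _; rewrite big_map. Qed.
Lemma sum_idid_Delta W (F : A * A * A * A -> W) (t : tensor3 A) :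
  \sum_(x <- idid_Delta Delta t) F x =
  \sum_(x <- t) \sum_(y <- Delta x.2) F (x.1.1, x.1.2, y.1, y.2).
Proof. by rewrite /idid_Delta big_flatten big_map; apply: eq_bigr => x _; rewrite big_map. Qed.
Lemma sum_Delta_idid W (F : A * A * A * A -> W) (t : tensor3 A) :
  \sum_(x <- Delta_idid Delta t) F x =
  \sum_(x <- t) \sum_(y <- Delta x.1.1) F (y.1, y.2, x.1.2, x.2).
Proof. by rewrite /Delta_idid big_flatten big_map; apply: eq_bigr => x _; rewrite big_map. Qed.
Lemma sum_id_Delta_id W (F : A * A * A * A -> W) (t : tensor3 A) :
  \sum_(x <- id_Delta_id Delta t) F x =
  \sum_(x <- t) \sum_(y <- Delta x.1.2) F (x.1.1, y.1, y.2, x.2).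
Proof. by rewrite /id_Delta_id big_flatten big_map; apply: eq_bigr => x _; rewrite big_map. Qed.
Lemma sum_one_tensor3 W (F : A * A * A * A -> W) (t : tensor3 A) :
  \sum_(x <- one_tensor3 t) F x = \sum_(x <- t) F (1, x.1.1, x.1.2, x.2).
Proof. by rewrite /one_tensor3 big_map. Qed.
Lemma sum_tensor3_one W (F : A * A * A * A -> W) (t : tensor3 A) :
  \sum_(x <- tensor3_one t) F x = \sum_(x <- t) F (x.1.1, x.1.2, x.2, 1).
Proof. by rewrite /tensor3_one big_map. Qed.

Definition tone4 : tensor4 A := [:: (1, 1, 1, 1)].
Lemma tmul4_1 (t : tensor4 A) : teq4 (tmul4 t tone4) t.
Proof. by move=> W m hm; rewrite sum_tmul4; apply: eq_bigr => x _; rewrite big_seq1 /= !mulr1. Qed.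
Lemma tmul1_4 (t : tensor4 A) : teq4 (tmul4 tone4 t) t.
Proof. by move=> W m hm; rewrite sum_tmul4 big_seq1; apply: eq_bigr => x _; rewrite /= !mul1r. Qed.

Lemma teq3_refl (t : tensor3 A) : teq3 t t. Proof. by []. Qed.
Lemma teq3_sym (t u : tensor3 A) : teq3 t u -> teq3 u t. Proof. by move=> h W m hm; rewrite h. Qed.
Lemma teq3_trans (t u v : tensor3 A) : teq3 t u -> teq3 u v -> teq3 t v.
Proof. by move=> h1 h2 W m hm; rewrite h1 // h2. Qed.
Lemma teq4_sym (t u : tensor4 A) : teq4 t u -> teq4 u t. Proof. by move=> h W m hm; rewrite h. Qed.
Lemma teq4_trans (t u v : tensor4 A) : teq4 t u -> teq4 u v -> teq4 t v.
Proof. by move=> h1 h2 W m hm; rewrite h1 // h2. Qed.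

Lemma tmul3A (t u v : tensor3 A) : teq3 (tmul3 t (tmul3 u v)) (tmul3 (tmul3 t u) v).
Proof.
move=> W m hm; rewrite /tmul3 !big_allpairs_dep /=.
apply: eq_bigr => x _; rewrite !big_allpairs_dep /=.
apply: eq_bigr => y _; apply: eq_bigr => z _ /=.
by rewrite !mulrA.
Qed.
Lemma tmul4A (t u v : tensor4 A) : teq4 (tmul4 t (tmul4 u v)) (tmul4 (tmul4 t u) v).
Proof.
move=> W m hm; rewrite /tmul4 !big_allpairs_dep /=.
apply: eq_bigr => x _; rewrite !big_allpairs_dep /=.
apply: eq_bigr => y _; apply: eq_bigr => z _ /=.
by rewrite !mulrA.
Qed.
Lemma tmul3_1 (t : tensor3 A) : teq3 (tmul3 t (tone3 A)) t.
Proof. by move=> W m hm; rewrite sum_tmul3; apply: eq_bigr => x _; rewrite big_seq1 /= !mulr1. Qed.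
Lemma tmul1_3 (t : tensor3 A) : teq3 (tmul3 (tone3 A) t) t.
Proof. by move=> W m hm; rewrite sum_tmul3 big_seq1; apply: eq_bigr => x _; rewrite /= !mul1r. Qed.

Lemma tmul3_congr_l (t t' u : tensor3 A) : teq3 t t' -> teq3 (tmul3 t u) (tmul3 t' u).
Proof.
move=> h W m hm; rewrite !sum_tmul3 /=.
apply: (h W (fun a b c => \sum_(y <- u) m (a * y.1.1) (b * y.1.2) (c * y.2))).
case: hm => h1 h2 h3; split=> ? ? /=; apply: kl_sum => y.
- exact: kl_comp (kl_mulr _) (h1 _ _).
- exact: kl_comp (kl_mulr _) (h2 _ _).
- exact: kl_comp (kl_mulr _) (h3 _ _).
Qed.
Lemma tmul3_congr_r (t u u' : tensor3 A) : teq3 u u' -> teq3 (tmul3 t u) (tmul3 t u').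
Proof.
move=> h W m hm; rewrite !sum_tmul3 /=; apply: eq_bigr => x _.
apply: (h W (fun a b c => m (x.1.1 * a) (x.1.2 * b) (x.2 * c))).
case: hm => h1 h2 h3; split=> ? ? /=.
- exact: kl_comp (kl_mull _) (h1 _ _).
- exact: kl_comp (kl_mull _) (h2 _ _).
- exact: kl_comp (kl_mull _) (h3 _ _).
Qed.
Lemma tmul4_congr_l (t t' u : tensor4 A) : teq4 t t' -> teq4 (tmul4 t u) (tmul4 t' u).
Proof.
move=> h W m hm; rewrite !sum_tmul4 /=.
apply: (h W (fun a b c d => \sum_(y <- u) m (a * y.1.1.1) (b * y.1.1.2) (c * y.1.2) (d * y.2))).
case: hm => h1 h2 h3 h4; split=> ? ? ? /=; apply: kl_sum => y.
- exact: kl_comp (kl_mulr _) (h1 _ _ _).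
- exact: kl_comp (kl_mulr _) (h2 _ _ _).
- exact: kl_comp (kl_mulr _) (h3 _ _ _).
- exact: kl_comp (kl_mulr _) (h4 _ _ _).
Qed.
Lemma tmul4_congr_r (t u u' : tensor4 A) : teq4 u u' -> teq4 (tmul4 t u) (tmul4 t u').
Proof.
move=> h W m hm; rewrite !sum_tmul4 /=; apply: eq_bigr => x _.
apply: (h W (fun a b c d => m (x.1.1.1 * a) (x.1.1.2 * b) (x.1.2 * c) (x.2 * d))).
case: hm => h1 h2 h3 h4; split=> ? ? ? /=.
- exact: kl_comp (kl_mull _) (h1 _ _ _).
- exact: kl_comp (kl_mull _) (h2 _ _ _).
- exact: kl_comp (kl_mull _) (h3 _ _ _).
- exact: kl_comp (kl_mull _) (h4 _ _ _).
Qed.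

End Tens.


Section QB.
Variable k : fieldType.
Variable A : algType k.
Variables (D : A -> tensor2 A) (e : A -> k) (p pi : tensor3 A).
Hypothesis qb : is_quasibialgebra D e p pi.
Implicit Types W : lmodType k.

Lemma DL W (m : A -> A -> W) : multilin2 m -> klinear (fun h => \sum_(x <- D h) m x.1 x.2).
Proof.
move=> hm a x y; case: qb => [[hL _] _].
by rewrite (hL a x y W m hm) sum_tadd2 sum_tscale2 //; case: hm.
Qed.
Lemma DM W (m : A -> A -> W) x y : multilin2 m ->
  \sum_(z <- D (x * y)) m z.1 z.2 = \sum_(z <- D x) \sum_(w <- D y) m (z.1 * w.1) (z.2 * w.2).
Proof. by move=> hm; case: qb => [[_ [hM _]] _]; rewrite (hM x y W m hm) sum_tmul2. Qed.
Lemma D1 W (m : A -> A -> W) : multilin2 m -> \sum_(z <- D 1) m z.1 z.2 = m 1 1.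
Proof. by move=> hm; case: qb => [[_ [_ h1]] _]; rewrite (h1 W m hm) big_seq1. Qed.
Lemma eL a x y : e (a *: x + y) = a * e x + e y. Proof. by case: qb => _ [[]]. Qed.
Lemma eM x y : e (x * y) = e x * e y. Proof. by case: qb => _ [[]]. Qed.
Lemma e1 : e 1 = 1. Proof. by case: qb => _ [[]]. Qed.
Lemma ekl W (w : W) : klinear (fun x => e x *: w). Proof. exact: kl_scale eL. Qed.
Lemma cnt1 W (g : A -> W) h : klinear g -> \sum_(x <- D h) e x.1 *: g x.2 = g h.
Proof.
move=> hg; case: qb => _ [_ [hc _]]; case: (hc h) => h1 _.
by rewrite -{2}h1 (klS hg); apply: eq_bigr => x _; rewrite (klZ hg).
Qed.
Lemma cnt2 W (g : A -> W) h : klinear g -> \sum_(x <- D h) e x.2 *: g x.1 = g h.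
Proof.
move=> hg; case: qb => _ [_ [hc _]]; case: (hc h) => _ h2.
by rewrite -{2}h2 (klS hg); apply: eq_bigr => x _; rewrite (klZ hg).
Qed.
Lemma qca h : teq3 (tmul3 (id_Delta D (D h)) p) (tmul3 p (Delta_id D (D h))).
Proof. by case: qb => _ [_ [_ [hq _]]]. Qed.
Lemma pent : teq4 (tmul4 (idid_Delta D p) (Delta_idid D p))
       (tmul4 (tmul4 (one_tensor3 p) (id_Delta_id D p)) (tensor3_one p)).
Proof. by case: qb => _ [_ [_ [_ [hp _]]]]. Qed.
Lemma norm W (m : A -> A -> W) : multilin2 m -> \sum_(x <- p) e x.1.2 *: m x.1.1 x.2 = m 1 1.
Proof.
move=> hm; case: qb => _ [_ [_ [_ [_ [hn _]]]]]; have := hn W m hm.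
rewrite big_map big_seq1 /= => <-; apply: eq_bigr => x _.
by case: hm => h1 _; rewrite (klZ (h1 _)).
Qed.
Lemma inv1 : teq3 (tmul3 p pi) (tone3 A). Proof. by case: qb => _ [_ [_ [_ [_ [_ []]]]]]. Qed.
Lemma inv2 : teq3 (tmul3 pi p) (tone3 A). Proof. by case: qb => _ [_ [_ [_ [_ [_ []]]]]]. Qed.

Lemma qca_inv h : teq3 (tmul3 (Delta_id D (D h)) pi) (tmul3 pi (id_Delta D (D h))).
Proof.
set X := id_Delta D (D h); set Y := Delta_id D (D h).
apply: (teq3_trans (u := tmul3 (tmul3 (tone3 A) Y) pi)).
  by apply: tmul3_congr_l; apply: teq3_sym; apply: tmul1_3.
apply: (teq3_trans (u := tmul3 (tmul3 (tmul3 pi p) Y) pi)).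
  by apply: tmul3_congr_l; apply: tmul3_congr_l; apply: teq3_sym; apply: inv2.
apply: (teq3_trans (u := tmul3 (tmul3 pi (tmul3 p Y)) pi)).
  by apply: tmul3_congr_l; apply: teq3_sym; apply: tmul3A.
apply: (teq3_trans (u := tmul3 (tmul3 pi (tmul3 X p)) pi)).
  by apply: tmul3_congr_l; apply: tmul3_congr_r; apply: teq3_sym; apply: qca.
apply: (teq3_trans (u := tmul3 pi (tmul3 (tmul3 X p) pi))).
  by apply: teq3_sym; apply: tmul3A.
apply: (teq3_trans (u := tmul3 pi (tmul3 X (tmul3 p pi)))).
  by apply: tmul3_congr_r; apply: teq3_sym; apply: tmul3A.
apply: (teq3_trans (u := tmul3 pi (tmul3 X (tone3 A)))).
  by apply: tmul3_congr_r; apply: tmul3_congr_r; apply: inv1.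
by apply: tmul3_congr_r; apply: tmul3_1.
Qed.

End QB.


Section QB2.
Variable k : fieldType.
Variable A : algType k.
Variables (D : A -> tensor2 A) (e : A -> k) (p pi : tensor3 A).
Hypothesis qb : is_quasibialgebra D e p pi.
Implicit Types W : lmodType k.

Lemma pent_e W (g : A -> A -> A -> W) : multilin3 g ->
  \sum_(x <- p) g x.1.1 x.1.2 x.2 =
  \sum_(z <- p) \sum_(x <- p) e x.2 *: g (z.1.1 * x.1.1) (z.1.2 * x.1.2) z.2.
Proof.
move=> hg; case: (hg) => g1 g2 g3.
have H4 : multilin4 (fun a b c d => g a b (e c *: d)).
  split=> [b c d|a c d|a b d|a b c] /=; [exact: g1 | exact: g2 | |].
    exact: (kl_comp (f := fun z => e z *: d) (ekl qb _) (g3 _ _)).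
  exact: (kl_comp (f := fun z => e c *: z) (kl_sc _) (g3 _ _)).
have := pent qb H4; rewrite /= !sum_tmul4 /=.
under eq_bigr do rewrite sum_Delta_idid.
rewrite sum_idid_Delta /=.
have -> : \sum_(i <- p) \sum_(y <- D i.2) \sum_(x <- p) \sum_(y0 <- D x.1.1)
   g (i.1.1 * y0.1) (i.1.2 * y0.2) (e (y.1 * x.1.2) *: (y.2 * x.2)) =
   \sum_(x <- p) g x.1.1 x.1.2 x.2.
  apply: eq_bigr => i _.
  transitivity (\sum_(y <- D i.2) e y.1 *: \sum_(x <- p) \sum_(y0 <- D x.1.1)
         g (i.1.1 * y0.1) (i.1.2 * y0.2) (e x.1.2 *: (y.2 * x.2))).
    apply: eq_bigr => y _; rewrite scaler_sumr; apply: eq_bigr => x _.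
    rewrite scaler_sumr; apply: eq_bigr => y0 _.
    by rewrite (eM qb) -scalerA (klZ (g3 _ _)).
  rewrite (cnt1 qb (g := fun w => \sum_(x <- p) \sum_(y0 <- D x.1.1)
         g (i.1.1 * y0.1) (i.1.2 * y0.2) (e x.1.2 *: (w * x.2)))); last first.
    apply: kl_sum => x; apply: kl_sum => y0.
    exact: kl_comp (kl_comp (kl_mulr _) (kl_sc _)) (g3 _ _).
  have hm : multilin2 (fun a d => \sum_(y0 <- D a) g (i.1.1 * y0.1) (i.1.2 * y0.2) (i.2 * d)).
    split=> [d|a] /=.
      apply: (DL qb (m := fun a b => g (i.1.1 * a) (i.1.2 * b) (i.2 * d))).
      split=> ? /=; [exact: kl_comp (kl_mull _) (g1 _ _)|].
      exact: kl_comp (kl_mull _) (g2 _ _).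
    apply: kl_sum => y0; exact: kl_comp (kl_mull _) (g3 _ _).
  have := norm qb hm; rewrite /= => hn.
  rewrite (D1 qb (m := fun a b => g (i.1.1 * a) (i.1.2 * b) (i.2 * 1))) ?mulr1 in hn; last first.
    split=> ? /=; [exact: kl_comp (kl_mull _) (g1 _ _)|exact: kl_comp (kl_mull _) (g2 _ _)].
  rewrite -hn; apply: eq_bigr => x _; rewrite scaler_sumr; apply: eq_bigr => y0 _.
  by rewrite (klZ (g3 _ _)).
move=> ->.
rewrite sum_one_tensor3 /=.
under eq_bigr => Y _ do rewrite sum_id_Delta_id /=.
under eq_bigr => Y _ do under eq_bigr => Z _ do under eq_bigr => w _ do rewrite sum_tensor3_one /=.
have hm : multilin2 (fun a d => \sum_(z <- p) \sum_(x <- p) e x.2 *: g (z.1.1 * x.1.1) (a * z.1.2 * x.1.2) (d * z.2)).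
  split=> [d|a] /=; apply: kl_sum => z; apply: kl_sum => x; apply: kl_scalev.
    exact: (kl_comp (f := fun a => a * z.1.2 * x.1.2) (kl_comp (kl_mulr _) (kl_mulr _)) (g2 _ _)).
  exact: kl_comp (kl_mulr _) (g3 _ _).
have := norm qb hm; rewrite /= => hn.
have -> : \sum_(z <- p) \sum_(x <- p) e x.2 *: g (z.1.1 * x.1.1) (z.1.2 * x.1.2) z.2 =
   \sum_(z <- p) \sum_(x <- p) e x.2 *: g (z.1.1 * x.1.1) (1 * z.1.2 * x.1.2) (1 * z.2).
  by apply: eq_bigr => z _; apply: eq_bigr => x _; rewrite !mul1r.
rewrite -hn; apply: eq_bigr => Y _; rewrite scaler_sumr; apply: eq_bigr => Z _.
rewrite exchange_big scaler_sumr; apply: eq_bigr => x _ /=.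
rewrite -(cnt2 qb (g := fun b => e Y.1.2 *: (e x.2 *: g (Z.1.1 * x.1.1) (Y.1.1 * b * x.1.2) (Y.2 * Z.2))) Z.1.2); last first.
  apply: kl_scalev; apply: kl_scalev.
  exact: (kl_comp (f := fun b => Y.1.1 * b * x.1.2) (kl_mulrl _ _) (g2 _ _)).
apply: eq_bigr => w _; rewrite !mul1r mulr1 !(eM qb) -!scalerA (klZ (g3 _ _)) (klZ (g3 _ _)) (klZ (g3 _ _)).
by rewrite !scalerA; congr (_ *: _); rewrite (mulrC (e Y.1.2)).
Qed.


Definition Ep : tensor3 A := [seq (x.1.1, e x.2 *: x.1.2, 1) | x <- p].
Lemma Ep1 : teq3 Ep (tone3 A).
Proof.
have h : teq3 p (tmul3 p Ep).
  move=> W g hg; rewrite (pent_e hg) sum_tmul3 /=; apply: eq_bigr => z _.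
  rewrite /Ep big_map; apply: eq_bigr => x _ /=.
  by rewrite mulr1 -scalerAr; case: hg => _ g2 _; rewrite (klZ (g2 _ _)).
apply: (teq3_trans (u := tmul3 (tone3 A) Ep)); first exact/teq3_sym/tmul1_3.
apply: (teq3_trans (u := tmul3 (tmul3 pi p) Ep)).
  by apply: tmul3_congr_l; apply: teq3_sym; apply: (inv2 qb).
apply: (teq3_trans (u := tmul3 pi (tmul3 p Ep))); first exact/teq3_sym/tmul3A.
apply: (teq3_trans (u := tmul3 pi p)); first by apply: tmul3_congr_r; apply: teq3_sym.
exact: (inv2 qb).
Qed.

Lemma norm3p W (g : A -> A -> W) : multilin2 g -> \sum_(x <- p) e x.2 *: g x.1.1 x.1.2 = g 1 1.
Proof.
move=> [h1 h2].
have hm : multilin3 (fun a b c => e c *: g a b).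
  split=> ? ? /=; [exact: kl_comp (h1 _) (kl_sc _) | exact: kl_comp (h2 _) (kl_sc _) | exact: (ekl qb _)].
have := Ep1 hm; rewrite /Ep big_map big_seq1 /= (e1 qb) scale1r => <-.
by apply: eq_bigr => x _; rewrite scale1r (klZ (h2 _)).
Qed.

Lemma norm3pi W (g : A -> A -> W) : multilin2 g -> \sum_(x <- pi) e x.2 *: g x.1.1 x.1.2 = g 1 1.
Proof.
move=> [h1 h2].
have hm : multilin3 (fun a b c => e c *: g a b).
  split=> ? ? /=; [exact: kl_comp (h1 _) (kl_sc _) | exact: kl_comp (h2 _) (kl_sc _) | exact: (ekl qb _)].
have := inv1 qb hm; rewrite sum_tmul3 big_seq1 /= (e1 qb) scale1r => <-.
rewrite exchange_big; apply: eq_bigr => t _ /=.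
have hm2 : multilin2 (fun a b => g (a * t.1.1) (b * t.1.2)).
  split=> ? /=; [exact: kl_comp (kl_mulr _) (h1 _) | exact: kl_comp (kl_mulr _) (h2 _)].
have := norm3p hm2; rewrite !mul1r /= => <-; rewrite scaler_sumr.
by apply: eq_bigr => x _ /=; rewrite (eM qb) mulrC scalerA.
Qed.


Lemma AA1 : teq4 (tmul4 (idid_Delta D pi) (idid_Delta D p)) (tone4 A).
Proof.
move=> W m [m1 m2 m3 m4]; rewrite sum_tmul4 big_seq1 /=.
under eq_bigr do rewrite sum_idid_Delta /=.
rewrite sum_idid_Delta /=.
have hm : multilin3 (fun a b c => \sum_(v <- D c) m a b v.1 v.2).
  split=> [b c|a c|a b] /=; [apply: kl_sum => v; exact: m1|apply: kl_sum => v; exact: m2|].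
  apply: (DL qb (m := fun x y => m a b x y)); split=> ? /=; [exact: m3|exact: m4].
have := inv2 qb hm; rewrite sum_tmul3 big_seq1 /=.
rewrite (D1 qb (m := fun x y => m 1 1 x y)); last by split=> ? /=; [exact: m3|exact: m4].
move=> <-; apply: eq_bigr => r _; rewrite exchange_big; apply: eq_bigr => x _ /=.
rewrite (DM qb (m := fun x0 y => m (r.1.1 * x.1.1) (r.1.2 * x.1.2) x0 y)) //.
Qed.

Lemma EE1 : teq4 (tmul4 (tensor3_one p) (tensor3_one pi)) (tone4 A).
Proof.
move=> W m [m1 m2 m3 m4]; rewrite sum_tmul4 big_seq1 /=.
have hm : multilin3 (fun a b c => m a b c 1).
  by split=> ? ? /=; [exact: m1|exact: m2|exact: m3].
have := inv1 qb hm; rewrite sum_tmul3 big_seq1 /= => <-.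
rewrite sum_tensor3_one; apply: eq_bigr => x _; rewrite sum_tensor3_one.
by apply: eq_bigr => t _ /=; rewrite mulr1.
Qed.

Lemma pentinv : teq4 (tmul4 (Delta_idid D p) (tensor3_one pi))
  (tmul4 (tmul4 (idid_Delta D pi) (one_tensor3 p)) (id_Delta_id D p)).
Proof.
set Ab := idid_Delta D pi; set A0 := idid_Delta D p; set B0 := Delta_idid D p.
set C0 := one_tensor3 p; set D0 := id_Delta_id D p; set E0 := tensor3_one p.
set Eb := tensor3_one pi.
apply: (teq4_trans (u := tmul4 (tmul4 (tone4 A) B0) Eb)).
  by apply: tmul4_congr_l; apply: teq4_sym; apply: tmul1_4.
apply: (teq4_trans (u := tmul4 (tmul4 (tmul4 Ab A0) B0) Eb)).
  by apply: tmul4_congr_l; apply: tmul4_congr_l; apply: teq4_sym; apply: AA1.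
apply: (teq4_trans (u := tmul4 (tmul4 Ab (tmul4 A0 B0)) Eb)).
  by apply: tmul4_congr_l; apply: teq4_sym; apply: tmul4A.
apply: (teq4_trans (u := tmul4 (tmul4 Ab (tmul4 (tmul4 C0 D0) E0)) Eb)).
  by apply: tmul4_congr_l; apply: tmul4_congr_r; apply: (pent qb).
apply: (teq4_trans (u := tmul4 Ab (tmul4 (tmul4 (tmul4 C0 D0) E0) Eb))).
  by apply: teq4_sym; apply: tmul4A.
apply: (teq4_trans (u := tmul4 Ab (tmul4 (tmul4 C0 D0) (tmul4 E0 Eb)))).
  by apply: tmul4_congr_r; apply: teq4_sym; apply: tmul4A.
apply: (teq4_trans (u := tmul4 Ab (tmul4 (tmul4 C0 D0) (tone4 A)))).
  by apply: tmul4_congr_r; apply: tmul4_congr_r; apply: EE1.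
apply: (teq4_trans (u := tmul4 Ab (tmul4 C0 D0))).
  by apply: tmul4_congr_r; apply: tmul4_1.
exact: tmul4A.
Qed.

End QB2.


Section QH.
Variable k : fieldType.
Variable A : algType k.
Variables (D : A -> tensor2 A) (e : A -> k) (p pi : tensor3 A) (S : A -> A) (al be : A).
Hypothesis qb : is_quasibialgebra D e p pi.
Hypothesis qa : is_quasi_antipode D e p pi S al be.
Implicit Types W : lmodType k.

Lemma Slin : klinear S. Proof. by case: qa => [[]]. Qed.
Lemma SM x y : S (x * y) = S y * S x. Proof. by case: qa => [[]]. Qed.
Lemma S1 : S 1 = 1. Proof. by case: qa => [[]]. Qed.
Lemma ant1 W (g : A -> W) h : klinear g -> \sum_(x <- D h) g (S x.1 * al * x.2) = e h *: g al.
Proof. by move=> hg; case: qa => _ a1 _ _ _; rewrite -(klS hg) a1 (klZ hg). Qed.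
Lemma ant2 W (g : A -> W) h : klinear g -> \sum_(x <- D h) g (x.1 * be * S x.2) = e h *: g be.
Proof. by move=> hg; case: qa => _ _ a2 _ _; rewrite -(klS hg) a2 (klZ hg). Qed.
Lemma ax3 W (g : A -> W) : klinear g -> \sum_(x <- p) g (x.1.1 * be * S x.1.2 * al * x.2) = g 1.
Proof. by move=> hg; case: qa => _ _ _ a3 _; rewrite -(klS hg) a3. Qed.

Lemma Aid W (f : A -> A -> W) x : multilin2 f ->
  \sum_(s <- D x) \sum_(u <- D s.1) \sum_(t <- pi) f (u.1 * t.1.1) (u.2 * t.1.2 * be * S t.2 * S s.2)
  = \sum_(t <- pi) f (t.1.1 * x) (t.1.2 * be * S t.2).
Proof.
move=> [f1 f2].
have hF : multilin3 (fun a b c => f a (b * be * S c)).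
  split=> [b c|a c|a b] /=; first exact: f1.
    exact: (kl_comp (f := fun b => b * be * S c) (kl_comp (kl_mulr _) (kl_mulr _)) (f2 _)).
  exact: (kl_comp (f := fun c => b * be * S c) (kl_comp Slin (kl_mull _)) (f2 _)).
have := qca_inv qb x hF; rewrite !sum_tmul3 sum_Delta_id /=.
under [in RHS]eq_bigr do rewrite sum_id_Delta /=.
have -> : \sum_(i <- D x) \sum_(y <- D i.1) \sum_(y0 <- pi)
    f (y.1 * y0.1.1) (y.2 * y0.1.2 * be * S (i.2 * y0.2)) =
  \sum_(s <- D x) \sum_(u <- D s.1) \sum_(t <- pi) f (u.1 * t.1.1) (u.2 * t.1.2 * be * S t.2 * S s.2).
  by do 3! (apply: eq_bigr => ? _); rewrite SM mulrA.
move=> ->; apply: eq_bigr => t _.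
transitivity (\sum_(s <- D x) e s.2 *: f (t.1.1 * s.1) (t.1.2 * be * S t.2)).
  apply: eq_bigr => s _.
  rewrite -(ant2 (g := fun c => f (t.1.1 * s.1) (t.1.2 * c * S t.2))); last first.
    exact: (kl_comp (f := fun c => t.1.2 * c * S t.2) (kl_mulrl _ _) (f2 _)).
  by apply: eq_bigr => w _; rewrite SM !mulrA.
apply: (cnt2 qb (g := fun y => f (t.1.1 * y) (t.1.2 * be * S t.2))).
exact: kl_comp (kl_mull _) (f1 _).
Qed.


Lemma Cid W (f : A -> A -> W) : multilin2 f ->
  \sum_(z <- p) \sum_(u <- D z.1.1) \sum_(t <- pi)
     f (u.1 * t.1.1) (u.2 * t.1.2 * be * S t.2 * S z.1.2 * al * z.2) = f 1 1.
Proof.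
move=> [f1 f2].
have hM : multilin4 (fun a b c d => f a (b * be * S c * al * d)).
  split=> [b c d|a c d|a b d|a b c] /=; first exact: f1.
  - exact: (kl_comp (f := fun b => b * be * S c * al * d)
      (kl_comp (kl_comp (kl_comp (kl_mulr _) (kl_mulr _)) (kl_mulr _)) (kl_mulr _)) (f2 _)).
  - exact: (kl_comp (f := fun c => b * be * S c * al * d)
      (kl_comp (kl_comp (kl_comp Slin (kl_mull _)) (kl_mulr _)) (kl_mulr _)) (f2 _)).
  - exact: (kl_comp (f := fun d => b * be * S c * al * d) (kl_mull _) (f2 _)).
transitivity (\sum_(x <- tmul4 (Delta_idid D p) (tensor3_one pi))
   (fun a b c d => f a (b * be * S c * al * d)) x.1.1.1 x.1.1.2 x.1.2 x.2).
  rewrite sum_tmul4 sum_Delta_idid /=; apply: eq_bigr => z _; apply: eq_bigr => u _.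
  by rewrite sum_tensor3_one; apply: eq_bigr => t _ /=; rewrite mulr1 SM !mulrA.
rewrite (pentinv qb hM) sum_tmul4 sum_tmul4 /= sum_idid_Delta /=.
transitivity (\sum_(r <- pi) \sum_(y <- D r.2) \sum_(Y <- p) \sum_(Z <- p) e Z.1.2 *:
   f (r.1.1 * Z.1.1) (r.1.2 * Y.1.1 * be * S Y.1.2 * S y.1 * al * y.2 * Y.2 * Z.2)).
  apply: eq_bigr => r _; apply: eq_bigr => y _; rewrite sum_one_tensor3; apply: eq_bigr => Y _ /=.
  rewrite sum_id_Delta_id; apply: eq_bigr => Z _ /=.
  rewrite -(ant2 (g := fun c => f (r.1.1 * Z.1.1)
     (r.1.2 * Y.1.1 * c * S Y.1.2 * S y.1 * al * y.2 * Y.2 * Z.2))); last first.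
    apply: (kl_comp (f := fun c => r.1.2 * Y.1.1 * c * S Y.1.2 * S y.1 * al * y.2 * Y.2 * Z.2)) (f2 _).
    apply: (kl_comp (f := fun c => r.1.2 * Y.1.1 * c * S Y.1.2 * S y.1 * al * y.2 * Y.2)) (kl_mulr _).
    apply: (kl_comp (f := fun c => r.1.2 * Y.1.1 * c * S Y.1.2 * S y.1 * al * y.2)) (kl_mulr _).
    apply: (kl_comp (f := fun c => r.1.2 * Y.1.1 * c * S Y.1.2 * S y.1 * al)) (kl_mulr _).
    apply: (kl_comp (f := fun c => r.1.2 * Y.1.1 * c * S Y.1.2 * S y.1)) (kl_mulr _).
    apply: (kl_comp (f := fun c => r.1.2 * Y.1.1 * c * S Y.1.2)) (kl_mulr _).
    exact: kl_mulrl.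
  by apply: eq_bigr => w _; rewrite mulr1 !SM !mulrA.
transitivity (\sum_(r <- pi) \sum_(y <- D r.2) \sum_(Y <- p)
   f r.1.1 (r.1.2 * Y.1.1 * be * S Y.1.2 * S y.1 * al * y.2 * Y.2)).
  apply: eq_bigr => r _; apply: eq_bigr => y _; apply: eq_bigr => Y _.
  have hm : multilin2 (fun a d => f (r.1.1 * a) (r.1.2 * Y.1.1 * be * S Y.1.2 * S y.1 * al * y.2 * Y.2 * d)).
    by split=> ? /=; [exact: kl_comp (kl_mull _) (f1 _)|exact: kl_comp (kl_mull _) (f2 _)].
  by rewrite (norm qb hm) /= !mulr1.
transitivity (\sum_(r <- pi) \sum_(Y <- p) e r.2 *:
   f r.1.1 (r.1.2 * Y.1.1 * be * S Y.1.2 * al * Y.2)).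
  apply: eq_bigr => r _; rewrite exchange_big; apply: eq_bigr => Y _ /=.
  rewrite -(ant1 (g := fun c => f r.1.1 (r.1.2 * Y.1.1 * be * S Y.1.2 * c * Y.2))); last first.
    apply: (kl_comp (f := fun c => r.1.2 * Y.1.1 * be * S Y.1.2 * c * Y.2)) (f2 _).
    exact: kl_mulrl.
  by apply: eq_bigr => y _; rewrite !mulrA.
rewrite exchange_big /=.
transitivity (\sum_(Y <- p) f 1 (Y.1.1 * be * S Y.1.2 * al * Y.2)).
  apply: eq_bigr => Y _.
  have hm : multilin2 (fun a b => f a (b * (Y.1.1 * be * S Y.1.2 * al * Y.2))).
    by split=> ? /=; [exact: f1|exact: kl_comp (kl_mulr _) (f2 _)].
  symmetry; rewrite -[Y.1.1 * be * S Y.1.2 * al * Y.2]mul1r -(norm3pi qb hm).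
  by apply: eq_bigr => r _; rewrite /= !mulrA.
exact: (ax3 (f2 1)).
Qed.


Lemma Bid W (f : A -> A -> W) h : multilin2 f ->
  \sum_(z <- p) \sum_(s <- D h) \sum_(u <- D (z.1.1 * s.1)) \sum_(t <- pi)
     f (u.1 * t.1.1) (u.2 * t.1.2 * be * S t.2 * S s.2 * S z.1.2 * al * z.2) = f h 1.
Proof.
move=> [f1 f2].
transitivity (\sum_(z <- p) \sum_(v <- D z.1.1) \sum_(s <- D h) \sum_(u <- D s.1) \sum_(t <- pi)
   f (v.1 * (u.1 * t.1.1)) (v.2 * (u.2 * t.1.2 * be * S t.2 * S s.2) * S z.1.2 * al * z.2)).
  apply: eq_bigr => z _; rewrite exchange_big; apply: eq_bigr => s _ /=.
  rewrite (DM qb (m := fun a b => \sum_(t <- pi)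
     f (a * t.1.1) (b * t.1.2 * be * S t.2 * S s.2 * S z.1.2 * al * z.2))); last first.
    split=> ? /=; apply: kl_sum => t; first exact: kl_comp (kl_mulr _) (f1 _).
    apply: (kl_comp (f := fun b => b * t.1.2 * be * S t.2 * S s.2 * S z.1.2 * al * z.2)) (f2 _).
    by do 6! apply: (kl_comp _ (kl_mulr _)); exact: kl_mulr.
  by apply: eq_bigr => v _; apply: eq_bigr => u _; apply: eq_bigr => t _; rewrite !mulrA.
transitivity (\sum_(z <- p) \sum_(v <- D z.1.1) \sum_(t <- pi)
   f (v.1 * (t.1.1 * h)) (v.2 * (t.1.2 * be * S t.2) * S z.1.2 * al * z.2)).
  apply: eq_bigr => z _; apply: eq_bigr => v _.
  apply: (Aid (f := fun a b => f (v.1 * a) (v.2 * b * S z.1.2 * al * z.2))).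
  split=> ? /=; first exact: kl_comp (kl_mull _) (f1 _).
  apply: (kl_comp (f := fun b => v.2 * b * S z.1.2 * al * z.2)) (f2 _).
  by do 2! apply: (kl_comp _ (kl_mulr _)); exact: kl_mulrl.
have hm : multilin2 (fun a b => f (a * h) b).
  by split=> ? /=; [exact: kl_comp (kl_mulr _) (f1 _)|exact: f2].
rewrite -[h in RHS]mul1r -(Cid hm); apply: eq_bigr => z _; apply: eq_bigr => v _.
by apply: eq_bigr => t _; rewrite !mulrA.
Qed.

End QH.


Section Main.
Variable k : fieldType.
Variable H : algType k.
Variables (DH : H -> tensor2 H) (eH : H -> k) (pH piH : tensor3 H) (S : H -> H) (al be : H).
Variable Q : falgType k.
Variables (DQ : Q -> tensor2 Q) (eQ : Q -> k) (pQ piQ : tensor3 Q) (nu : H -> Q).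
Hypothesis qbH : is_quasibialgebra DH eH pH piH.
Hypothesis qaH : is_quasi_antipode DH eH pH piH S al be.
Hypothesis qbQ : is_quasibialgebra DQ eQ pQ piQ.
Hypothesis mor : is_quasibialg_morphism DH eH pH DQ eQ pQ nu.
Hypothesis surj : forall q : Q, exists h : H, nu h = q.
Implicit Types W : lmodType k.

Lemma nuL : klinear nu. Proof. by case: mor => [[]]. Qed.
Lemma nuM x y : nu (x * y) = nu x * nu y. Proof. by case: mor => [[]]. Qed.
Lemma nu1 : nu 1 = 1. Proof. by case: mor => [[]]. Qed.
Lemma nue h : eQ (nu h) = eH h. Proof. by case: mor. Qed.
Lemma nuD W (m : Q -> Q -> W) h : multilin2 m ->
  \sum_(x <- DQ (nu h)) m x.1 x.2 = \sum_(x <- DH h) m (nu x.1) (nu x.2).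
Proof. by move=> hm; case: mor => _ hD _ _; rewrite (hD h W m hm) big_map. Qed.

Definition n := \dim (fullv : {vspace Q}).
Definition X := vbasis (fullv : {vspace Q}).
Definition bb (i : 'I_n) : Q := X`_i.
Definition cc (i : 'I_n) (v : Q) : k := coord X i v.
Lemma cc_lin i a x y : cc i (a *: x + y) = a * cc i x + cc i y.
Proof. by rewrite /cc linearD linearZ. Qed.
Lemma cc_bb i j : cc j (bb i) = (i == j)%:R.
Proof. by rewrite /cc /bb coord_free //; case/andP: (vbasisP (fullv : {vspace Q})). Qed.
Lemma expand v : v = \sum_i cc i v *: bb i.
Proof. exact: coord_vbasis (memvf v). Qed.

Lemma bil_exp W (g : Q -> Q -> W) a v : multilin2 g ->
  g a v = \sum_i \sum_j (cc i a * cc j v) *: g (bb i) (bb j).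
Proof.
move=> [g1 g2]; rewrite {1}(expand a) (klS (g1 _)); apply: eq_bigr => i _.
rewrite (klZ (g1 _)) {1}(expand v) (klS (g2 _)) scaler_sumr; apply: eq_bigr => j _.
by rewrite (klZ (g2 _)) scalerA.
Qed.


Definition bform (M : 'M[k]_n) (a b : Q) : 'M[k]_1 :=
  (\sum_i \sum_j cc i a * cc j b * M i j)%:M.
Lemma beta_bil M : multilin2 (bform M).
Proof.
split=> [y|x] c u v; rewrite /bform scale_scalar_mx -raddfD /=; congr (_%:M).
  rewrite mulr_sumr -big_split; apply: eq_bigr => i _ /=.
  rewrite mulr_sumr -big_split; apply: eq_bigr => j _ /=.
  by rewrite cc_lin !mulrA -!mulrDl.
rewrite mulr_sumr -big_split; apply: eq_bigr => i _ /=.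
rewrite mulr_sumr -big_split; apply: eq_bigr => j _ /=.
by rewrite cc_lin; ring.
Qed.
Lemma beta_bb M i j : bform M (bb i) (bb j) = (M i j)%:M.
Proof.
rewrite /bform; congr (_%:M).
rewrite (bigD1 i) //= [X in _ + X]big1 => [|i' ne]; last first.
  by rewrite big1 // => j' _; rewrite (cc_bb i i') [i == i']eq_sym (negbTE ne) !mul0r.
rewrite addr0 (bigD1 j) //= [X in _ + X]big1 => [|j' ne]; last first.
  by rewrite (cc_bb j j') [j == j']eq_sym (negbTE ne) mulr0 mul0r.
by rewrite addr0 !cc_bb !eqxx !mul1r.
Qed.
Lemma beta_linM a M M' x y : bform (a *: M + M') x y = a *: bform M x y + bform M' x y.
Proof.
rewrite /bform scale_scalar_mx -raddfD /=; congr (_%:M).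
rewrite mulr_sumr -big_split; apply: eq_bigr => i _ /=.
rewrite mulr_sumr -big_split; apply: eq_bigr => j _ /=.
by rewrite !mxE; ring.
Qed.

Definition G (M : 'M[k]_n) (a v : Q) : 'M[k]_1 :=
  \sum_(w <- DQ a) \sum_(t <- piH) bform M (w.1 * nu t.1.1) (w.2 * nu t.1.2 * nu be * nu (S t.2) * v).
Lemma G_bil M : multilin2 (G M).
Proof.
case: (beta_bil M) => b1 b2; split=> [v|a].
  apply: (DL qbQ (m := fun w1 w2 => \sum_(t <- piH)
      bform M (w1 * nu t.1.1) (w2 * nu t.1.2 * nu be * nu (S t.2) * v))).
  split=> ? /=; apply: kl_sum => t; first exact: kl_comp (kl_mulr _) (b1 _).
  apply: (kl_comp (f := fun w2 => w2 * nu t.1.2 * nu be * nu (S t.2) * v)) (b2 _).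
  by do 3! apply: (kl_comp _ (kl_mulr _)); exact: kl_mulr.
apply: kl_sum => w; apply: kl_sum => t; exact: kl_comp (kl_mull _) (b2 _).
Qed.
Lemma G_linM c M M' a v : G (c *: M + M') a v = c *: G M a v + G M' a v.
Proof.
rewrite /G scaler_sumr -big_split; apply: eq_bigr => w _ /=.
by rewrite scaler_sumr -big_split; apply: eq_bigr => t _ /=; rewrite beta_linM.
Qed.

Definition OmT (M : 'M[k]_n) : 'M[k]_n := \matrix_(i, j) (G M (bb i) (bb j) 0 0).
Lemma OmT_lin : linear OmT.
Proof. by move=> c M M'; apply/matrixP => i j; rewrite !mxE G_linM !mxE. Qed.
HB.instance Definition _ := GRing.isLinear.Build k 'M[k]_n 'M[k]_n *:%R OmT OmT_lin.


Lemma Gnu M y v : G M (nu y) v = \sum_(u <- DH y) \sum_(t <- piH)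
   bform M (nu u.1 * nu t.1.1) (nu u.2 * nu t.1.2 * nu be * nu (S t.2) * v).
Proof.
rewrite /G (nuD (m := fun w1 w2 => \sum_(t <- piH)
   bform M (w1 * nu t.1.1) (w2 * nu t.1.2 * nu be * nu (S t.2) * v))) //.
case: (beta_bil M) => b1 b2.
split=> ? /=; apply: kl_sum => t; first exact: kl_comp (kl_mulr _) (b1 _).
apply: (kl_comp (f := fun w2 => w2 * nu t.1.2 * nu be * nu (S t.2) * v)) (b2 _).
by do 3! apply: (kl_comp _ (kl_mulr _)); exact: kl_mulr.
Qed.

Lemma scmx_inj (x y : k) : (x%:M : 'M[k]_1) = y%:M -> x = y.
Proof. by move/matrixP/(_ 0 0); rewrite !mxE. Qed.

Lemma OmT0 M : OmT M = 0 -> M = 0.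
Proof.
move=> h0.
have G0 : forall a v, G M a v = 0.
  move=> a v; rewrite (bil_exp _ _ (G_bil M)) big1 // => i _; rewrite big1 // => j _.
  rewrite [G M _ _]mx11_scalar.
  by have := congr1 (fun N : 'M[k]_n => N i j) h0; rewrite /= !mxE => ->; rewrite scale_scalar_mx mulr0 raddf0.
have B0 : forall h b0, bform M (nu h) b0 = 0.
  move=> h b0; case: (beta_bil M) => b1 b2.
  have hf : multilin2 (fun a c => bform M (nu a) (nu c * b0)).
    split=> ? /=; first exact: kl_comp nuL (b1 _).
    exact: kl_comp (kl_comp nuL (kl_mulr _)) (b2 _).
  have := Bid qbH qaH h hf; rewrite /= nu1 mul1r => <-.
  apply: big1 => z _; apply: big1 => s _.
  transitivity (G M (nu (z.1.1 * s.1)) (nu (S s.2 * S z.1.2 * al * z.2) * b0)); last exact: G0.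
  rewrite Gnu; apply: eq_bigr => u _; apply: eq_bigr => t _; by rewrite !nuM !mulrA.
apply/matrixP => i j; rewrite mxE; apply: scmx_inj.
rewrite -beta_bb; have [h <-] := surj (bb i); by rewrite B0 raddf0.
Qed.

Lemma OmT_surj N : exists M, OmT M = N.
Proof.
have inj : injective (linfun OmT).
  move=> M M'; rewrite !lfunE /= => /eqP; rewrite -subr_eq0 -linearB /= => /eqP/OmT0 /eqP.
  by rewrite subr_eq0 => /eqP.
have k0 : lker (linfun OmT) == 0%VS by apply/lker0P.
have := memvf N; rewrite -(lker0_limgf k0) => /memv_imgP [M _ ->].
by exists M; rewrite lfunE.
Qed.

Lemma key x : nu x = 0 -> nu (S x) = 0.
Proof.
move=> nx0; rewrite (expand (nu (S x))) big1 // => j0 _.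
pose E := \matrix_(i, j) (eQ (bb i) * (j == j0)%:R) : 'M[k]_n.
have [M hM] := OmT_surj E.
have GE : forall a v, G M a v = (eQ a * cc j0 v)%:M.
  move=> a v.
  have hR : multilin2 (fun a v => (eQ a * cc j0 v)%:M : 'M[k]_1).
    split=> [v' c a1 a2|a' c v1 v2] /=; rewrite scale_scalar_mx -raddfD /=; congr (_%:M).
      by rewrite (eL qbQ) mulrDl mulrA.
    by rewrite cc_lin mulrDr mulrCA.
  rewrite (bil_exp _ _ (G_bil M)) (bil_exp _ _ hR); apply: eq_bigr => i _; apply: eq_bigr => j _.
  rewrite [G M _ _]mx11_scalar; congr (_ *: _); congr (_%:M).
  by have := congr1 (fun N : 'M[k]_n => N i j) hM; rewrite /= !mxE => ->; rewrite cc_bb.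
have T1 : \sum_(s <- DH x) G M (nu s.1) (nu (S s.2)) = (cc j0 (nu (S x)))%:M.
  rewrite -(cnt1 qbH (g := fun y => (cc j0 (nu (S y)))%:M : 'M[k]_1)); last first.
    move=> c y1 y2; rewrite scale_scalar_mx -raddfD /=; congr (_%:M).
    by rewrite (Slin qaH) nuL cc_lin.
  by apply: eq_bigr => s _; rewrite GE nue scale_scalar_mx.
have T2 : \sum_(s <- DH x) G M (nu s.1) (nu (S s.2)) = 0.
  case: (beta_bil M) => b1 b2.
  have hf : multilin2 (fun a c => bform M (nu a) (nu c)).
    by split=> ? /=; [exact: kl_comp nuL (b1 _)|exact: kl_comp nuL (b2 _)].
  transitivity (\sum_(t <- piH) bform M (nu (t.1.1 * x)) (nu (t.1.2 * be * S t.2))).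
    rewrite -(Aid qbH qaH x hf); apply: eq_bigr => s _; rewrite Gnu.
    by apply: eq_bigr => u _; apply: eq_bigr => t _; rewrite !nuM.
  apply: big1 => t _; rewrite nuM nx0 mulr0.
  by have := kl0 (b1 (nu (t.1.2 * be * S t.2))).
have : (cc j0 (nu (S x)))%:M = (0 : k)%:M :> 'M[k]_1 by rewrite -T1 T2 raddf0.
by move/scmx_inj => ->; rewrite scale0r.
Qed.


Definition lift (q : Q) : H := proj1_sig (constructive_indefinite_description _ (surj q)).
Lemma liftK q : nu (lift q) = q.
Proof. exact: proj2_sig (constructive_indefinite_description _ (surj q)). Qed.
Definition Sbar (q : Q) : Q := nu (S (lift q)).
Lemma SbarE h : Sbar (nu h) = nu (S h).
Proof.
have h0 : nu (lift (nu h) - h) = 0 by rewrite (klB nuL) liftK subrr.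
have := key h0; rewrite (klB (Slin qaH)) (klB nuL) => /eqP; rewrite subr_eq0 => /eqP.
by rewrite /Sbar.
Qed.
Lemma Sbar_anti : is_anti_alg_endo Sbar.
Proof.
split.
- move=> a x y; have [hx <-] := surj x; have [hy <-] := surj y.
  by rewrite -(klZ nuL) -(klD nuL) !SbarE (Slin qaH) nuL.
- move=> x y; have [hx <-] := surj x; have [hy <-] := surj y.
  by rewrite -nuM !SbarE (SM qaH) nuM.
- by rewrite -nu1 SbarE (S1 qaH).
Qed.
Lemma Sbar_lin : klinear Sbar. Proof. by case: Sbar_anti. Qed.

Lemma ml_nu3 W (m : Q -> Q -> Q -> W) : multilin3 m -> multilin3 (fun a b c => m (nu a) (nu b) (nu c)).
Proof.
case=> m1 m2 m3; split=> ? ? /=; [exact: kl_comp nuL (m1 _ _)|exact: kl_comp nuL (m2 _ _)|exact: kl_comp nuL (m3 _ _)].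
Qed.
Lemma pQ_eq W (m : Q -> Q -> Q -> W) : multilin3 m ->
  \sum_(x <- pQ) m x.1.1 x.1.2 x.2 = \sum_(x <- pH) m (nu x.1.1) (nu x.1.2) (nu x.2).
Proof. by move=> hm; case: mor => _ _ _ hp; rewrite -(hp W m hm) big_map. Qed.

Definition piN : tensor3 Q := [seq (nu x.1.1, nu x.1.2, nu x.2) | x <- piH].
Lemma piQ_eq : teq3 piN piQ.
Proof.
have h1 : teq3 (tmul3 pQ piN) (tone3 Q).
  move=> W m hm; rewrite sum_tmul3 big_seq1 /=.
  have hm' : multilin3 (fun a b c => \sum_(y <- piN) m (a * y.1.1) (b * y.1.2) (c * y.2)).
    case: hm => m1 m2 m3; split=> ? ? /=; apply: kl_sum => y.
    - exact: kl_comp (kl_mulr _) (m1 _ _).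
    - exact: kl_comp (kl_mulr _) (m2 _ _).
    - exact: kl_comp (kl_mulr _) (m3 _ _).
  rewrite (pQ_eq hm') /=.
  have := inv1 qbH (ml_nu3 hm); rewrite sum_tmul3 big_seq1 /= !nu1 => <-.
  by apply: eq_bigr => x _; rewrite /piN big_map; apply: eq_bigr => t _; rewrite /= !nuM.
apply: (teq3_trans (u := tmul3 (tone3 Q) piN)); first exact/teq3_sym/tmul1_3.
apply: (teq3_trans (u := tmul3 (tmul3 piQ pQ) piN)).
  by apply: tmul3_congr_l; apply: teq3_sym; apply: (inv2 qbQ).
apply: (teq3_trans (u := tmul3 piQ (tmul3 pQ piN))); first exact/teq3_sym/tmul3A.
apply: (teq3_trans (u := tmul3 piQ (tone3 Q))); first exact: tmul3_congr_r.
exact: tmul3_1.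
Qed.

Lemma Sbar_qa : is_quasi_antipode DQ eQ pQ piQ Sbar (nu al) (nu be).
Proof.
have [s1 s2 s3] := Sbar_anti.
split => //.
- move=> q; have [h <-] := surj q.
  rewrite (nuD (m := fun a b => Sbar a * nu al * b)); last first.
    split=> ? /=; [exact: kl_comp Sbar_lin (kl_comp (kl_mulr _) (kl_mulr _))|exact: kl_mull].
  under eq_bigr do rewrite SbarE -!nuM.
  rewrite -(klS nuL); case: qaH => _ a1 _ _ _; by rewrite a1 (klZ nuL) nue.
- move=> q; have [h <-] := surj q.
  rewrite (nuD (m := fun a b => a * nu be * Sbar b)); last first.
    split=> ? /=; [exact: kl_comp (kl_mulr _) (kl_mulr _)|exact: kl_comp Sbar_lin (kl_mull _)].
  under eq_bigr do rewrite SbarE -!nuM.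
  rewrite -(klS nuL); case: qaH => _ _ a2 _ _; by rewrite a2 (klZ nuL) nue.
- rewrite (pQ_eq (m := fun a b c => a * nu be * Sbar b * nu al * c)); last first.
    split=> ? ? /=; [| |exact: kl_mull].
      exact: (kl_comp (kl_comp (kl_comp (kl_mulr _) (kl_mulr _)) (kl_mulr _)) (kl_mulr _)).
    exact: (kl_comp Sbar_lin (kl_comp (kl_comp (kl_mull _) (kl_mulr _)) (kl_mulr _))).
  under eq_bigr do rewrite SbarE -!nuM.
  rewrite -(klS nuL); case: qaH => _ _ _ a3 _; by rewrite a3 nu1.
- have hm : multilin3 (fun a b c => Sbar a * nu al * b * nu be * Sbar c).
    split=> ? ? /=.
    + exact: (kl_comp Sbar_lin (kl_comp (kl_comp (kl_comp (kl_mulr _) (kl_mulr _)) (kl_mulr _)) (kl_mulr _))).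
    + exact: (kl_comp (kl_comp (kl_mull _) (kl_mulr _)) (kl_mulr _)).
    + exact: (kl_comp Sbar_lin (kl_mull _)).
  rewrite -(piQ_eq hm) /piN big_map /=.
  under eq_bigr do rewrite !SbarE -!nuM.
  rewrite -(klS nuL); case: qaH => _ _ _ _ a4; by rewrite a4 nu1.
Qed.

End Main.

Unset Implicit Arguments.
Set Strict Implicit.

Theorem theorem2p1 (k : fieldType) (H : algType k)
    (DeltaH : H -> tensor2 H) (epsH : H -> k) (phiH phiinvH : tensor3 H)
    (S : H -> H) (alpha beta : H)
    (Q : falgType k)
    (DeltaQ : Q -> tensor2 Q) (epsQ : Q -> k) (phiQ phiinvQ : tensor3 Q)
    (nu : H -> Q) :
  is_quasibialgebra DeltaH epsH phiH phiinvH ->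
  is_quasi_antipode DeltaH epsH phiH phiinvH S alpha beta ->
  is_quasibialgebra DeltaQ epsQ phiQ phiinvQ ->
  is_quasibialg_morphism DeltaH epsH phiH DeltaQ epsQ phiQ nu ->
  (forall q : Q, exists h : H, nu h = q) ->
  (forall h : H, nu h = 0 -> nu (S h) = 0) /\
  exists Sbar : Q -> Q,
    [/\ is_anti_alg_endo Sbar,
        (forall h : H, Sbar (nu h) = nu (S h)),
        is_quasi_antipode DeltaQ epsQ phiQ phiinvQ Sbar (nu alpha) (nu beta) &
        is_quasiHopf_morphism DeltaH epsH phiH S alpha beta
                              DeltaQ epsQ phiQ Sbar (nu alpha) (nu beta) nu].
Proof.
move=> qbH qaH qbQ mor surj; split; first exact: (key qbH qaH qbQ mor surj).

exists (Sbar S surj); split.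
- exact: (Sbar_anti qbH qaH qbQ mor surj).
- exact: (SbarE qbH qaH qbQ mor surj).
- exact: (Sbar_qa qbH qaH qbQ mor surj).
- by split => // h; rewrite (SbarE qbH qaH qbQ mor surj).
Qed.
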